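(* Let $G$ be a simple directed graph and $W$ a CTLN with graph $G$ (legal parameters, nondegenerate). Suppose $\sigma$ is a permitted motif with $\sigma=\tau\cup\{k\}$, $k\notin\tau$, where $\tau$ has uniform in-degree $d$ and the in-degree of $k$ in $G|_\sigma$ satisfies $d^{in}_k\le d$. Then $\operatorname{idx}(\sigma)=-\operatorname{idx}(\tau)$.
   Context: Legal parameters: $\delta>0$, $0<\varepsilon<\frac{\delta}{\delta+1}$. $W=W(G,\varepsilon,\delta)$ has $W_{ii}=0$, $W_{ij}=-1+\varepsilon$ if $j\to i$, $W_{ij}=-1-\delta$ if $i\ne j$, $j\not\to i$; dynamics $\dot x_i=-x_i+[\sum_jW_{ij}x_j+\theta]_+$, $\theta>0$; nondegenerate: $\det(I-W_\rho)\ne0$ and all Cramer determinants for $(I-W_\rho)x=\theta1_\rho$ nonzero for all $\rho$. $W_\rho$ is the principal submatrix on $\rho$. $\sigma$ is a permitted motif if $\theta(I-W_\sigma)^{-1}1_\sigma$ has all entries positive. $\tau$ has uniform in-degree $d$ if every node of $\tau$ has in-degree $d$ in $G|_\tau$. $\operatorname{idx}(\rho)=\operatorname{sgn}\det(I-W_\rho)$. *)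

(* Defs.v *)
From HB Require Import structures.
From mathcomp Require Import all_boot all_order all_algebra.
Set Implicit Arguments. Unset Strict Implicit. Unset Printing Implicit Defensive.
Import Order.TTheory GRing.Theory Num.Theory.
Local Open Scope ring_scope.

(* Graph on nodes 'I_n: [G j i] means the edge j -> i. *)

Definition ctln_W (R : pzRingType) (n : nat) (G : rel 'I_n) (eps delta : R) : 'M[R]_n :=
  \matrix_(i, j) (if i == j then 0
                  else if G j i then -1 + eps else -1 - delta).

(* principal submatrix on rho (indices listed in increasing enum order) *)
Definition principal (R : Type) (n : nat) (rho : {set 'I_n}) (A : 'M[R]_n)
  : 'M[R]_#|rho| :=
  \matrix_(i, j) A (enum_val i) (enum_val j).

Definition IW (R : pzRingType) (n : nat) (W : 'M[R]_n) (rho : {set 'I_n})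
  : 'M[R]_#|rho| := 1%:M - principal rho W.

Definition cramer_mx (R : Type) (m : nat) (A : 'M[R]_m) (b : 'cV[R]_m) (c : 'I_m)
  : 'M[R]_m :=
  \matrix_(r, s) (if s == c then b r 0 else A r s).

Definition ctln_nondegenerate (R : comPzRingType) (n : nat) (W : 'M[R]_n) (theta : R) :=
  forall rho : {set 'I_n},
    \det (IW W rho) != 0 /\
    forall c : 'I_#|rho|, \det (cramer_mx (IW W rho) (const_mx theta) c) != 0.

Definition permitted_motif (R : numFieldType) (n : nat) (W : 'M[R]_n) (theta : R)
  (sigma : {set 'I_n}) :=
  forall i : 'I_#|sigma|,
    0 < (theta *: (invmx (IW W sigma) *m (const_mx 1 : 'cV[R]_#|sigma|))) i 0.

Definition indeg (n : nat) (G : rel 'I_n) (rho : {set 'I_n}) (i : 'I_n) : nat :=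
  #|[set j in rho | G j i]|.

Definition uniform_indeg (n : nat) (G : rel 'I_n) (tau : {set 'I_n}) (d : nat) :=
  forall i, i \in tau -> indeg G tau i = d.

Definition ctln_idx (R : numDomainType) (n : nat) (W : 'M[R]_n) (rho : {set 'I_n}) : R :=
  Num.sg (\det (IW W rho)).

(* Main.v *)
Require Import Defs.
From HB Require Import structures.
From mathcomp Require Import all_boot all_order all_algebra all_fingroup.
From mathcomp Require Import ring.
Import Order.TTheory GRing.Theory Num.Theory.
From mathcomp Require Import lra.
Local Open Scope ring_scope.
Lemma det_cramer1 (R : comPzRingType) m (v : 'cV[R]_m) c :
  \det (cramer_mx 1%:M v c) = v c 0.
Proof.
rewrite (expand_det_row _ c) (bigD1 c) //= big1 ?addr0; last first.
  by move=> s /negbTE hs; rewrite !mxE hs eq_sym hs mul0r.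
rewrite !mxE eqxx /cofactor addnn -signr_odd odd_double expr0 mul1r.
have -> : row' c (col' c (cramer_mx 1%:M v c)) = 1%:M.
  apply/matrixP=> a b; rewrite !mxE lift_eqF (inj_eq (@lift_inj _ c)).
  by [].
by rewrite det1 mulr1.
Qed.

Lemma mul_cramer1 (R : comPzRingType) m (A : 'M[R]_m) (v : 'cV[R]_m) c :
  A *m cramer_mx 1%:M v c = cramer_mx A (A *m v) c.
Proof.
apply/matrixP=> r s; rewrite !mxE; case: eqP => [->|hs].
  by apply: eq_bigr => j _; rewrite !mxE eqxx.
rewrite -[in RHS](mulmx1 A) mxE; apply: eq_bigr => j _.
by rewrite !mxE; case: eqP.
Qed.

Lemma det_reindex (R : comPzRingType) m p (M : 'M[R]_m) (N : 'M[R]_p)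
  (h : 'I_m -> 'I_p) : injective h -> m = p ->
  (forall a b, M a b = N (h a) (h b)) -> \det M = \det N.
Proof.
move=> hi e; case: p / e N h hi => N h hi hM.
pose s := perm hi.
have -> : M = perm_mx s *m N *m perm_mx s^-1.
  by rewrite -row_permE -col_permE; apply/matrixP=> a b; rewrite !mxE !permE hM.
by rewrite !det_mulmx !det_perm odd_permV mulrC mulrA -expr2 sqrr_sign mul1r.
Qed.

Section Rows.
Variables (R : realFieldType) (n : nat) (G : rel 'I_n) (eps delta : R).
Hypothesis noloop : forall i, ~~ G i i.

Lemma sum_ind (rho : {set 'I_n}) (P : pred 'I_n) :
  \sum_(y in rho) ((P y)%:R : R) = #|[set y in rho | P y]|%:R.
Proof.
transitivity (\sum_(y in rho | P y) (1:R)).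
  by rewrite big_mkcondr; apply: eq_bigr => y _; case: (P y).
rewrite sumr_const; congr (_ *+ _); apply: eq_card => y; rewrite !inE.
by [].
Qed.

Let B i (rho : {set 'I_n}) := [set y in rho | (i != y) && ~~ G y i].

Lemma decomp1 i y : (1 : R) = (G y i)%:R + ((i != y) && ~~ G y i)%:R + (i == y)%:R.
Proof.
case: eqP => [<-|_]; first by rewrite (negbTE (noloop i)) /=; ring.
by case: (G y i) => /=; ring.
Qed.

Lemma sum_eqi (rho : {set 'I_n}) i : \sum_(y in rho) ((i == y)%:R : R) = (i \in rho)%:R.
Proof.
case: (boolP (i \in rho)) => hi.
  rewrite (bigD1 i) //= eqxx big1 ?addr0 // => y /andP[_ hy].
  by rewrite eq_sym (negbTE hy).
by rewrite big1 // => y hy; case: eqP => // e; rewrite e hy in hi.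
Qed.

Lemma rowW i (rho : {set 'I_n}) :
  \sum_(y in rho) ctln_W G eps delta i y =
  (indeg G rho i)%:R * (-1 + eps) +
  (#|rho|%:R - (indeg G rho i)%:R - (i \in rho)%:R) * (-1 - delta).
Proof.
have card : (#|rho|%:R : R) = (indeg G rho i)%:R + #|B i rho|%:R + (i \in rho)%:R.
  rewrite -sum1_card natr_sum (eq_bigr _ (fun y _ => decomp1 i y)).
  by rewrite !big_split /= sum_eqi !sum_ind.
have -> : #|rho|%:R - (indeg G rho i)%:R - (i \in rho)%:R = (#|B i rho|%:R : R).
  by rewrite card; ring.
rewrite -!sum_ind !mulr_suml -big_split /=; apply: eq_bigr => y _.
rewrite !mxE; case: eqP => [<-|_]; first by rewrite (negbTE (noloop i)) /=; ring.
by case: (G y i) => /=; ring.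
Qed.

Lemma rowW_ge0 i (rho : {set 'I_n}) :
  (0 : R) <= #|rho|%:R - (indeg G rho i)%:R - (i \in rho)%:R.
Proof.
have card : (#|rho|%:R : R) = (indeg G rho i)%:R + #|B i rho|%:R + (i \in rho)%:R.
  rewrite -sum1_card natr_sum (eq_bigr _ (fun y _ => decomp1 i y)).
  by rewrite !big_split /= sum_eqi !sum_ind.
have -> : #|rho|%:R - (indeg G rho i)%:R - (i \in rho)%:R = (#|B i rho|%:R : R).
  by rewrite card; ring.
by rewrite ler0n.
Qed.


End Rows.

Theorem lemma6 (R : realFieldType) (n : nat) (G : rel 'I_n)
  (eps delta theta : R) (sigma tau : {set 'I_n}) (k : 'I_n) (d : nat) :
  (forall i, ~~ G i i) ->
  0 < delta -> 0 < eps -> eps < delta / (delta + 1) -> 0 < theta ->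
  ctln_nondegenerate (ctln_W G eps delta) theta ->
  permitted_motif (ctln_W G eps delta) theta sigma ->
  tau != set0 ->
  sigma = k |: tau -> k \notin tau ->
  uniform_indeg G tau d ->
  (indeg G sigma k <= d)%N ->
  ctln_idx (ctln_W G eps delta) sigma = - ctln_idx (ctln_W G eps delta) tau.
Proof.
move=> noloop hd he heps ht nd hperm tau0 hsig hk unif hdk.
set W := ctln_W G eps delta.
have ks : k \in sigma by rewrite hsig setU11.
have [t0 t0t] := set0Pn _ tau0.
pose iota := enum_rank_in ks k.
have eviota : enum_val iota = k := enum_rankK_in ks ks.
set A := IW W sigma.
have [detA _] := nd sigma.
have [detT _] := nd tau.
have Au : A \in unitmx by rewrite unitmxE unitfE.
pose x := theta *: (invmx A *m (const_mx 1 : 'cV[R]_#|sigma|)).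
have Ax : A *m x = const_mx theta.
  rewrite /x -scalemxAr mulmxA mulmxV // mul1mx.
  by apply/matrixP => i j; rewrite !mxE mulr1.
have xpos : 0 < x iota 0 := hperm iota.
have memt : forall r, r != iota -> enum_val r \in tau.
  move=> r hr; have : enum_val r \in k |: tau by rewrite -hsig enum_valP.
  rewrite !inE; case/orP => // /eqP e.
  by rewrite -eviota in e; move/enum_val_inj: e => e; rewrite e eqxx in hr.
have Aentry : forall r j, A r j = ((enum_val r == enum_val j)%:R - W (enum_val r) (enum_val j)).
  by move=> r j; rewrite !mxE (inj_eq enum_val_inj).
pose S r := \sum_(j < #|sigma| | j != iota) A r j.
have Seq : forall r, S r = \sum_(y in tau) (((enum_val r == y)%:R : R) - W (enum_val r) y).
  move=> r; rewrite /S.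
  transitivity (\sum_(j < #|sigma| | enum_val j != k)
      (((enum_val r == enum_val j)%:R : R) - W (enum_val r) (enum_val j))).
    apply: eq_big => [j|j _]; last exact: Aentry.
    by rewrite -eviota (inj_eq enum_val_inj).
  rewrite -(big_enum_val_cond (fun y => y != k) (fun y => ((enum_val r == y)%:R : R) - W (enum_val r) y)).
  apply: eq_bigl => y; rewrite hsig !inE; case: (eqVneq y k) => [->|_] /=; [by rewrite (negbTE hk) | by rewrite andbT].

pose t := #|tau|.
pose lam := 1 - ((d%:R : R) * (-1 + eps) + (t%:R - d%:R - 1) * (-1 - delta)).
have St : forall r, r != iota -> S r = lam.
  move=> r hr; rewrite Seq sumrB sum_eqi (rowW _ _ _ _ _ noloop) (memt r hr) unif ?memt //.
have dkE : indeg G sigma k = indeg G tau k.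
  rewrite /indeg hsig; apply: eq_card => y; rewrite !inE.
  by case: eqVneq => [->|] //=; rewrite (negbTE (noloop k)) andbF.
pose dk := indeg G tau k.
pose mu := 0 - ((dk%:R : R) * (-1 + eps) + (t%:R - dk%:R - 0) * (-1 - delta)).
have Sio : S iota = mu.
  rewrite Seq sumrB sum_eqi (rowW _ _ _ _ _ noloop) eviota (negbTE hk) /=.
  by rewrite /mu /t /dk mulr0n.
have eps1 : eps < 1.
  apply: (lt_trans heps); rewrite ltr_pdivrMr ?mul1r; lra.
have bge0 : (0 : R) <= t%:R - d%:R - 1.
  have := @rowW_ge0 R n G noloop t0 tau; by rewrite unif // t0t.
have lampos : 0 < lam.
  have h1 : (0 : R) <= d%:R * (1 - eps) by apply: mulr_ge0; [exact: ler0n | lra].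
  have h2 : (0 : R) <= (t%:R - d%:R - 1) * (1 + delta) by apply: mulr_ge0; lra.
  have -> : lam = 1 + d%:R * (1 - eps) + (t%:R - d%:R - 1) * (1 + delta) by rewrite /lam; ring.
  lra.
have lammu : lam - mu < 0.
  have -> : lam - mu = - delta - (d%:R - dk%:R) * (eps + delta) by rewrite /lam /mu; ring.
  have : (dk%:R : R) <= d%:R by rewrite ler_nat /dk -dkE.
  move=> h; have h3 : (0 : R) <= (d%:R - dk%:R) * (eps + delta) by apply: mulr_ge0; lra.
  lra.
pose c := theta - theta / lam * mu.
have cneg : c < 0.
  have -> : c = (theta * (lam - mu)) * lam^-1 by rewrite /c; field; rewrite gt_eqF.
  by rewrite pmulr_llt0 ?invr_gt0 // pmulr_rlt0.
pose w : 'cV[R]_#|sigma| := \col_j ((j != iota)%:R).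
pose v := x - (theta / lam) *: w.
have Av : forall r, (A *m v) r 0 = theta - theta / lam * S r.
  move=> r; transitivity ((A *m x) r 0 - theta / lam * (A *m w) r 0).
    by rewrite /v mulmxBr -[A *m (_ *: w)]scalemxAr !mxE.
  rewrite Ax mxE; congr (_ - _ * _); rewrite mxE.
  rewrite /S (big_mkcond (fun j => j != iota)); apply: eq_bigr => j _; rewrite [w j 0]mxE.
  by case: (j != iota); rewrite ?mulr1n ?mulr0n ?mulr1 ?mulr0.
have vio : v iota 0 = x iota 0 by rewrite !mxE eqxx mulr0 subr0.
pose D := cramer_mx A (A *m v) iota.
have detD1 : \det D = \det A * x iota 0.
  by rewrite /D -mul_cramer1 det_mulmx det_cramer1 vio.
have memL : forall a, enum_val (lift iota a) \in tau.
  by move=> a; apply: memt; rewrite lift_eqF.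
pose h := fun a => enum_rank_in t0t (enum_val (lift iota a)).
have hE : forall a, enum_val (h a) = enum_val (lift iota a).
  by move=> a; rewrite /h enum_rankK_in ?memL.
have hinj : injective h.
  move=> a b e; have := congr1 enum_val e; rewrite !hE.
  by move/enum_val_inj/lift_inj.
have Dcol : forall r, D r iota = (A *m v) r 0.
  by move=> r; rewrite /D /cramer_mx mxE eqxx.
have detD2 : \det D = c * \det (IW W tau).
  rewrite (expand_det_col _ iota) (bigD1 iota) //= big1 ?addr0; last first.
    move=> r hr; rewrite Dcol Av (St r hr) divfK ?subrr ?mul0r //.
    by rewrite gt_eqF.
  rewrite Dcol Av Sio /cofactor addnn -signr_odd odd_double expr0 mul1r.
  congr (_ * _).
  apply: (@det_reindex _ _ _ (row' iota (col' iota D)) (IW W tau) h hinj).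
    by rewrite hsig cardsU1 hk.
  move=> a b; rewrite !mxE lift_eqF !hE (inj_eq hinj) (inj_eq (@lift_inj _ iota)).
  by [].
rewrite /ctln_idx -/A.
have := congr1 Num.sg (etrans (esym detD1) detD2).
rewrite !sgrM (gtr0_sg xpos) (ltr0_sg cneg) mulr1 mulN1r.
by [].
Qed.
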